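(* Let $S$ be a finite semigroup. (i) If $S$ is monogenic, then $\sigma_s(S)=\infty$. (ii) If $S$ is a group, then $\sigma_s(S)=\sigma_g(S)$. (iii) If $S$ is neither monogenic nor a group, then $\sigma_s(S)=2$.
   Context: A semigroup is a nonempty set with an associative binary operation; a subsemigroup is a nonempty subset closed under the operation. A semigroup is monogenic if it is generated (as a semigroup) by a single element. For a semigroup $S$, $\sigma_s(S)$ denotes the least positive integer $n$ such that $S$ is the union of $n$ proper subsemigroups, and $\sigma_s(S)=\infty$ if no such finite $n$ exists. For a group $G$, $\sigma_g(G)$ is defined analogously using proper subgroups. *)

(* Defs.v *)
From HB Require Import structures.
From mathcomp Require Import all_boot.
From Stdlib Require Import ClassicalEpsilon.
Set Implicit Arguments. Unset Strict Implicit. Unset Printing Implicit Defensive.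

Section Semigroup.
Variables (T : finType) (op : T -> T -> T).

Definition is_subsemigroup (A : {set T}) : Prop :=
  A != set0 /\ (forall x y, x \in A -> y \in A -> op x y \in A).

(* x^(n+1) = x op x op ... op x (n+1 factors) *)
Definition spow (x : T) (n : nat) : T := iter n (op x) x.

Definition monogenic : Prop :=
  exists a : T, forall x : T, exists n : nat, x = spow a n.

Definition is_identity (e : T) : Prop := forall z, op e z = z /\ op z e = z.

Definition is_group : Prop :=
  exists e, is_identity e /\ forall x, exists y, op x y = e /\ op y x = e.

Definition is_subgroup (A : {set T}) : Prop :=
  A != set0 /\ (forall x y, x \in A -> y \in A -> op x y \in A) /\
  (forall x, x \in A -> exists2 y, y \in A & is_identity (op x y) /\ is_identity (op y x)).

Definition covered_by (Q : {set T} -> Prop) (n : nat) : Prop :=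
  exists F : n.-tuple {set T},
    (forall i : 'I_n, Q (tnth F i) /\ tnth F i != setT) /\
    \bigcup_(i < n) tnth F i = setT.

Definition pbool (P : Prop) : bool :=
  if excluded_middle_informative P then true else false.

(* least positive n such that S is covered by n proper Q-sets; None = infinity *)
Definition cover_number (Q : {set T} -> Prop) : option nat :=
  match excluded_middle_informative
          (exists n, (0 < n) && pbool (covered_by Q n)) with
  | left H => Some (ex_minn H)
  | right _ => None
  end.

Definition sigma_s : option nat := cover_number is_subsemigroup.
Definition sigma_g : option nat := cover_number is_subgroup.

End Semigroup.

(* Main.v *)
From Stdlib Require Import Classical ClassicalEpsilon FunctionalExtensionality PropExtensionality.
Require Import Defs.
From mathcomp Require Import all_boot.
Set Implicit Arguments. Unset Strict Implicit. Unset Printing Implicit Defensive.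

Lemma pboolP (P : Prop) : pbool P = true <-> P.
Proof. by rewrite /pbool; case: excluded_middle_informative. Qed.

Lemma surj_inj (T : finType) (f : T -> T) :
  (forall y, exists x, f x = y) -> injective f.
Proof.
move=> sf.
have ex y : exists x, f x == y by case: (sf y) => x <-; exists x.
pose g y := xchoose (ex y).
have gK : cancel g f by move=> y; exact/eqP/(xchooseP (ex y)).
have [g' gg' g'g] := injF_bij (can_inj gK).
have fE x : f x = g' x by rewrite -{1}(g'g x) gK.
apply: (@can_inj _ _ _ g) => x; by rewrite fE g'g.
Qed.

Section S.
Variables (T : finType) (op : T -> T -> T) (opA : associative op).

Lemma spowS x n : spow op x n.+1 = op x (spow op x n).
Proof. by []. Qed.

Lemma spow_add x m n : spow op x (m + n).+1 = op (spow op x m) (spow op x n).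
Proof.
elim: m => [|m IH] //=.
by rewrite -opA -IH.
Qed.

Lemma spow_in (A : {set T}) x n : (forall y z, y \in A -> z \in A -> op y z \in A) ->
  x \in A -> spow op x n \in A.
Proof. move=> cl xA; elim: n => [|n IH] //=; exact: cl. Qed.

Lemma cover2 (Q : {set T} -> Prop) (A B : {set T}) :
  Q A -> A != setT -> Q B -> B != setT -> A :|: B = setT -> covered_by Q 2.
Proof.
move=> QA nA QB nB U.
exists [tuple A; B]; split.
  by case=> [[|[|]]] //= _; rewrite /tnth /=.
by rewrite !big_ord_recl big_ord0 setU0 /tnth /=.
Qed.

Lemma not_cover1 (Q : {set T} -> Prop) : ~ covered_by Q 1.
Proof.
case=> F [H U]; have [_ /eqP] := H ord0; apply.
by rewrite -U big_ord_recl big_ord0 setU0.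
Qed.


Lemma mono_none : monogenic op -> sigma_s op = None.
Proof.
case=> a Ha; rewrite /sigma_s /cover_number.
case: excluded_middle_informative => [H0|//]; exfalso.
case: H0 => n /andP[_ /pboolP [F [H U]]].
have: a \in \bigcup_(i < n) tnth F i by rewrite U inE.
case/bigcupP => i _ ai; have [[_ cl] /eqP] := H i; apply; apply/setP => y.
rewrite inE; have [k ->] := Ha y; exact: spow_in.
Qed.

Lemma semi_eq_sub : is_group op -> is_subsemigroup op = is_subgroup op.
Proof.
move=> [e [ide inv]].
apply: functional_extensionality => A; apply: propositional_extensionality; split;
  last by case=> ne [cl _].
case=> ne cl; split=>//; split=>// x xA.
pose f (i : 'I_#|T|.+1) := spow op x i.
have ninj: ~~ injectiveb f.
  apply/negP => /injectiveP inj; have := leq_card f inj.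
  by rewrite card_ord ltnn.
case/injectivePn: ninj => i [j neq eqf].
have key : forall i0 j0, i0 < j0 -> spow op x i0 = spow op x j0 -> exists d, spow op x d = e.
  clear i j neq eqf => i j lt E; exists (j - i).-1.
  have Ej : j = ((j - i).-1 + i).+1.
    rewrite addnC -addnS prednK ?subn_gt0 //. by rewrite subnKC // ltnW.
  rewrite Ej spow_add in E.
  have [y [wy _]] := inv (spow op x i).
  have [_ ez] := ide (spow op x (j - i).-1).
  transitivity (op (spow op x (j - i).-1) (op (spow op x i) y)); first by rewrite wy ez.
  by rewrite opA -E wy.
have [d de] : exists d, spow op x d = e.
  have [lt|gt|eqij] := ltngtP i j.
  - exact: key lt eqf.
  - exact: key gt (esym eqf).
  - by move: neq; rewrite (val_inj eqij) eqxx.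
case: d de => [|d] de.
  exists x => //; rewrite /= in de; rewrite de; have [-> _] := ide e; done.
exists (spow op x d); first exact: spow_in.
split; first by rewrite -spowS de.
by rewrite -[x]/(spow op x 0) -spow_add addn0 de.
Qed.

Lemma caseA : ~ monogenic op -> (exists x, forall y z, op y z != x) ->
  covered_by (is_subsemigroup op) 2.
Proof.
move=> nm [x hx].
apply: (cover2 (A := [set y | y != x]) (B := [set y | pbool (exists n, y = spow op x n)])).
- split; last by move=> a b _ _; rewrite inE; exact: hx.
  apply/set0Pn; apply: NNPP => H; apply: nm; exists x => y; exists 0.
  case: (eqVneq y x) => [-> //|ne]; exfalso; apply: H; exists y; by rewrite inE.
- by apply/eqP => /setP /(_ x); rewrite !inE eqxx.
- split.
    apply/set0Pn; exists x; rewrite inE; apply/pboolP; by exists 0.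
  move=> a b; rewrite !inE => /pboolP [m ->] /pboolP [n ->]; apply/pboolP.
  by exists (m + n).+1; rewrite spow_add.
- apply/eqP => BT; apply: nm; exists x => y.
  have: y \in [set y | pbool (exists n, y = spow op x n)] by rewrite BT inE.
  by rewrite inE => /pboolP.
- apply/setP => y; rewrite !inE; case: eqP => [->|_] //=; apply/pboolP; by exists 0.
Qed.

Lemma cover_right : 0 < #|T| -> (forall a, exists s, s != a /\ forall t, s != op a t) ->
  covered_by (is_subsemigroup op) 2.
Proof.
move=> T0 H.
pose rid (R : {set T}) := [forall x in R, forall s, op x s \in R].
pose P R := [&& R != set0, R != setT & rid R].
pose xS x := [set y | (y == x) || [exists t, y == op x t]].
have xSr x : rid (xS x).
  apply/forall_inP => y; rewrite inE => /orP [/eqP ->| /existsP [t /eqP ->]];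
    apply/forallP => s; rewrite inE; apply/orP; right; apply/existsP.
    by exists s.
  by exists (op t s); rewrite opA.
have xSx x : x \in xS x by rewrite inE eqxx.
have xSp x : xS x != setT.
  have [s [sa hs]] := H x.
  apply/eqP => /setP /(_ s); rewrite !inE (negbTE sa) /= => /existsP [t st].
  by move: (hs t); rewrite st.
have xSn x : xS x != set0 by apply/set0Pn; exists x.
have rid_sub R : R != set0 -> rid R -> is_subsemigroup op R.
  move=> ne r; split=> // a b aR _; exact: (forallP (forall_inP r a aR) b).
case/card_gt0P: T0 => x0 _.
have P0 : P (xS x0) by rewrite /P xSp xSr xSn.
case: (@arg_maxnP _ (xS x0) P (fun R => #|R|) P0) => R PR maxR.
move/and3P: PR => [Rne RT Rr].
have [x xR] : exists x, x \notin R.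
  apply: NNPP => nex; move/eqP: RT; apply; apply/setP => y; rewrite inE.
  apply/negPn/negP => yR; apply: nex; by exists y.
have U : R :|: xS x = setT.
  apply/eqP; apply: contraT => nT.
  have PU : P (R :|: xS x).
    rewrite /P nT /=; apply/andP; split.
      by apply/set0Pn; exists x; rewrite inE xSx orbT.
    apply/forall_inP => y; rewrite inE => /orP [yR|yX]; apply/forallP => s; rewrite inE.
      by rewrite (forallP (forall_inP Rr y yR) s).
    by rewrite (forallP (forall_inP (xSr x) y yX) s) orbT.
  have := maxR _ PU; rewrite /= leqNgt => /negP H0; exfalso; apply: H0.
  apply: proper_card; apply/properP; split; first exact: subsetUl.
  by exists x; rewrite // inE xSx orbT.
exact: (cover2 (rid_sub _ Rne Rr) RT (rid_sub _ (xSn x) (xSr x)) (xSp x) U).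
Qed.

Lemma monoid_case e : is_identity op e -> ~ is_group op ->
  covered_by (is_subsemigroup op) 2.
Proof.
move=> ide ng.
pose G := [set s | [exists y, (op s y == e) && (op y s == e)]].
have eG : e \in G by rewrite inE; apply/existsP; exists e; rewrite (proj1 (ide e)) eqxx.
have GT : G != setT.
  apply/eqP => GT; apply: ng; exists e; split=> // x.
  have: x \in G by rewrite GT inE.
  by rewrite inE => /existsP [y /andP [/eqP ? /eqP ?]]; exists y.
apply: (cover2 (A := G) (B := ~: G)) => //.
- split; first by apply/set0Pn; exists e.
  move=> s t; rewrite !inE => /existsP [ys /andP [/eqP s1 /eqP s2]] /existsP [yt /andP [/eqP t1 /eqP t2]].
  apply/existsP; exists (op yt ys); apply/andP; split; apply/eqP.
    by rewrite -opA (opA t) t1 (proj1 (ide ys)).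
  by rewrite -opA (opA ys) s2 (proj1 (ide t)).
- split.
    apply/set0Pn; apply: NNPP => nx; move/eqP: GT; apply; apply/setP => y.
    rewrite in_setT; apply/negPn/negP => yG; apply: nx; exists y; by rewrite in_setC yG.
  move=> s t; rewrite !inE => sG tG; apply/negP => /existsP [y /andP [/eqP h1 /eqP h2]].
  move/negP: sG; apply; apply/existsP; exists (op t y).
  have sr : op s (op t y) = e by rewrite opA.
  have inj : injective (op s).
    apply: surj_inj => u; exists (op (op t y) u); by rewrite opA sr (proj1 (ide u)).
  rewrite sr eqxx /=; apply/eqP; apply: inj.
  by rewrite opA sr (proj1 (ide s)) (proj2 (ide s)).
- by apply/eqP => /setP /(_ e); rewrite in_setC in_setT eG.
- by rewrite setUCr.
Qed.

End S.

Lemma flip_semi (T : finType) (op : T -> T -> T) A :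
  is_subsemigroup (fun x y => op y x) A -> is_subsemigroup op A.
Proof. by case=> ne cl; split=> // x y xA yA; exact: cl. Qed.

Lemma covered_mono (T : finType) (Q Q' : {set T} -> Prop) n :
  (forall A, Q A -> Q' A) -> covered_by Q n -> covered_by Q' n.
Proof. move=> QQ [F [H U]]; exists F; split=> // i; have [? ?] := H i; split=> //; exact: QQ. Qed.

Theorem mainTheorem1 (T : finType) (op : T -> T -> T)
  (opA : associative op) (T_nonempty : 0 < #|T|) :
  (monogenic op -> sigma_s op = None) /\
  (is_group op -> sigma_s op = sigma_g op) /\
  (~ monogenic op -> ~ is_group op -> sigma_s op = Some 2).
Proof.
split; first exact: mono_none.
split; first by move=> G; rewrite /sigma_s /sigma_g (semi_eq_sub opA G).
move=> nm ng.
have C2 : covered_by (is_subsemigroup op) 2.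
  case: (classic (exists x, forall y z, op y z != x)) => [hA|hA].
    exact: caseA.
  have S2 : forall x, exists y z, op y z = x.
    move=> x; apply: NNPP => nx; apply: hA; exists x => y z; apply/eqP => E.
    by apply: nx; exists y, z.
  case: (classic (forall a, exists s, s != a /\ forall t, s != op a t)) => [hR|hR].
    exact: cover_right.
  case: (classic (forall b, exists s, s != b /\ forall t, s != op t b)) => [hL|hL].
    apply: (covered_mono (@flip_semi T op)).
    apply: (@cover_right T (fun x y => op y x)) => // x y z; by rewrite opA.
  have [a ha] : exists a, forall s, s = a \/ exists t, s = op a t.
    apply: NNPP => nex; apply: hR => a; apply: NNPP => n2; apply: nex; exists a => s.
    apply: NNPP => n3; apply: n2; exists s; split.
      by apply/eqP => sa; apply: n3; left.
    by move=> t; apply/eqP => st; apply: n3; right; exists t.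
  have [b hb] : exists b, forall s, s = b \/ exists t, s = op t b.
    apply: NNPP => nex; apply: hL => b; apply: NNPP => n2; apply: nex; exists b => s.
    apply: NNPP => n3; apply: n2; exists s; split.
      by apply/eqP => sb; apply: n3; left.
    by move=> t; apply/eqP => st; apply: n3; right; exists t.
  have [t0 at0] : exists t0, op a t0 = a.
    have [y [z E]] := S2 a.
    case: (ha y) => [ya|[w yw]]; first by exists z; subst y.
    by exists (op w z); rewrite opA -yw.
  have [u0 bu0] : exists u0, op u0 b = b.
    have [y [z E]] := S2 b.
    case: (hb z) => [zb|[w zw]]; first by exists y; subst z.
    by exists (op y w); rewrite -opA -zw.
  have inja : injective (op a).
    apply: surj_inj => s; case: (ha s) => [->|[t ->]]; first by exists t0.
    by exists t.
  have injb : injective (fun t => op t b).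
    apply: surj_inj => s; case: (hb s) => [->|[t ->]]; first by exists u0.
    by exists t.
  have le s : op t0 s = s by apply: inja; rewrite opA at0.
  have re s : op s u0 = s by apply: injb; rewrite /= -opA bu0.
  have E : t0 = u0 by rewrite -(re t0) le.
  apply: (monoid_case opA (e := t0)) => // s; split; first exact: le.
  by rewrite E re.
rewrite /sigma_s /cover_number.
case: excluded_middle_informative => [H|H]; last first.
  by exfalso; apply: H; exists 2; apply/pboolP.
congr Some; case: ex_minnP => m /andP [m0 /pboolP Cm] minm.
have : m <= 2 by apply: minm; apply/pboolP.
case: m m0 Cm {minm} => [|[|[|m]]] //.
by move=> _ /not_cover1.
Qed.
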